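(* Every ordered graph $F$ on $k$ vertices that does not contain a monotone path of length two is an ordered subgraph of $H_k$.
   Context: An ordered graph is a graph with a totally ordered vertex set. A monotone path of length two in $F$ consists of vertices $u<v<w$ with $uv,vw\in E(F)$. $H_k$ is the ordered graph with vertex set $[k]\times\{0,1\}$, ordered lexicographically ($(a,i)<(b,j)$ iff $a<b$, or $a=b$ and $i<j$), and edge set $\{(x,0)(y,1): x\le y\}$. $F$ is an ordered subgraph of $H$ if there is an injective order-preserving map $V(F)\to V(H)$ sending edges of $F$ to edges of $H$. *)

(* Defs.v *)
From mathcomp Require Import all_boot.
Set Implicit Arguments. Unset Strict Implicit. Unset Printing Implicit Defensive.

Definition simple_graph (k : nat) (e : rel 'I_k) : Prop :=
  irreflexive e /\ symmetric e.

Definition has_monotone_P2 (k : nat) (e : rel 'I_k) : Prop :=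
  exists u v w : 'I_k, [/\ u < v, v < w, e u v & e v w].

(* Vertex set of H_k : [k] x {0,1}, with 0 = false, 1 = true;
   first coordinate a : 'I_k stands for a+1 in [k]. *)
Definition Hvert (k : nat) := ('I_k * bool)%type.

Definition Hlt (k : nat) (p q : Hvert k) : bool :=
  (p.1 < q.1) || ((p.1 == q.1) && ~~ p.2 && q.2).

Definition Hedge (k : nat) (p q : Hvert k) : bool :=
  (~~ p.2 && q.2 && (p.1 <= q.1)) || (~~ q.2 && p.2 && (q.1 <= p.1)).

Definition ordered_subgraph_of_H (m k : nat) (e : rel 'I_m) : Prop :=
  exists f : 'I_m -> Hvert k,
    [/\ injective f,
        (forall x y : 'I_m, x < y -> Hlt (f x) (f y)) &
        (forall x y : 'I_m, e x y -> Hedge (f x) (f y))].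

(* Main.v *)
Require Import Defs.
From mathcomp Require Import all_boot.

Theorem lemma4p1 (k : nat) (e : rel 'I_k) :
  simple_graph e -> ~ has_monotone_P2 e -> ordered_subgraph_of_H k e.
Proof.
move=> [irr sym] noP.
pose b (v : 'I_k) := [exists u : 'I_k, (u < v) && e u v].
have key : forall u v : 'I_k, u < v -> e u v -> (b v && ~~ b u).
  move=> u v uv euv; apply/andP; split.
    by apply/existsP; exists u; rewrite uv euv.
  apply/negP => /existsP [w /andP [wu ewu]].
  by apply: noP; exists w, u, v; split.
exists (fun v => (v, b v)); split.
- by move=> x y [].
- by move=> x y xy; rewrite /Hlt /= xy.
- move=> x y exy; rewrite /Hedge /=.
  case: (ltngtP x y) => [xy|yx|xy].
  + by case/andP: (key _ _ xy exy) => -> ->.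
  + rewrite sym in exy.
    by case/andP: (key _ _ yx exy) => -> ->; rewrite orbT.
  + have xy' : x = y by apply: val_inj.
    by rewrite xy' irr in exy.
Qed.
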